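(* (i) $\mathbf{co}<_{\mathrm{Learn}}\mathbf{nUs}$ and $\mathbf{co}<^{\mathrm{fin}}_{\mathrm{Learn}}\mathbf{nUs}$; (ii) $\mathbf{nUs}<_{\mathrm{Learn}}E_{range}$ and $\mathbf{nUs}\equiv^{\mathrm{fin}}_{\mathrm{Learn}}E_{range}$; (iii) $\mathbf{nUs}<^{\mathrm{fin}}_{\mathrm{Learn}}\mathbf{Ex}$, and in particular $\mathbf{nUs}<_{\mathrm{Learn}}\mathbf{Ex}$.
   Context: All structures are countable, have domain $\mathbb{N}$, are in a finite relational signature, and are identified with their atomic diagrams (elements of $2^{\mathbb{N}}$). A family of structures $\mathfrak{K}$ is a countable set of pairwise nonisomorphic such structures. $\mathcal{S}\restriction_s$ is the finite substructure on $\{0,\dots,s\}$. $\mathrm{LD}(\mathfrak{K})\subseteq2^{\mathbb{N}}$ is the set of structures with domain $\mathbb{N}$ isomorphic to a member of $\mathfrak{K}$ (subspace topology). The hypothesis space is $\{\ulcorner\mathcal{A}\urcorner:\mathcal{A}\in\mathfrak{K}\}\cup\{?\}$; a learner is an arbitrary function from $\{\mathcal{S}\restriction_s:\mathcal{S}\in\mathrm{LD}(\mathfrak{K})\}$ to the hypothesis space. $\mathbf{Ex}$-learnable: some learner $\mathbf{M}$ such that for each $\mathcal{S}\in\mathrm{LD}(\mathfrak{K})$, $\mathbf{M}(\mathcal{S}\restriction_n)$ is eventually constantly $\ulcorner\mathcal{A}\urcorner$ where $\mathcal{A}\cong\mathcal{S}$. $\mathbf{nUs}$-learnable: some learner $\mathbf{Ex}$-learning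 $\mathfrak{K}$ such that, on each $\mathcal{S}\cong\mathcal{A}$, once it first outputs $\ulcorner\mathcal{A}\urcorner$ it outputs $\ulcorner\mathcal{A}\urcorner$ at all later stages. $\mathbf{co}$-learnable: some learner $\mathbf{M}$ such that for each $\mathcal{S}\in\mathrm{LD}(\mathfrak{K})$, $\{\mathbf{M}(\mathcal{S}\restriction_s):s\}\setminus\{?\}=\{\ulcorner\mathcal{B}\urcorner:\mathcal{B}\in\mathfrak{K},\mathcal{B}\neq\mathcal{A}\}$ where $\mathcal{A}\cong\mathcal{S}$. For an equivalence relation $E$ on a space $X$, $\mathfrak{K}$ is $E$-learnable if there is a continuous $\Gamma:\mathrm{LD}(\mathfrak{K})\to X$ with $\mathcal{S}\cong\mathcal{S}'\iff\Gamma(\mathcal{S})E\Gamma(\mathcal{S}')$ on $\mathrm{LD}(\mathfrak{K})$. $E_{range}$ on $\mathbb{N}^{\mathbb{N}}$: $p\,E_{range}\,q\iff\{p(m):m\}=\{q(m):m\}$. For criteria $X,Y$: $X\leq_{\mathrm{Learn}}Y$ iff every $X$-learnable family is $Y$-learnable; $X\leq^{\mathrm{fin}}_{\mathrm{Learn}}Y$ iff every finite $X$-learnable family is $Y$-learnable; $<$ means $\leq$ but not $\geq$; $\equiv$ means both $\leq$ and $\geq$. *)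

(* Defs.v *)
From mathcomp Require Import all_boot.
Set Implicit Arguments. Unset Strict Implicit. Unset Printing Implicit Defensive.

(* A finite relational signature: the list of arities of its relation symbols. *)
Definition signature := seq nat.

(* A structure with domain nat in signature [sig]: the interpretation of each
   relation symbol (equivalently, its atomic diagram). *)
Definition structure (sig : signature) :=
  forall i : 'I_(size sig), (nth 0 sig i).-tuple nat -> bool.

Definition iso (sig : signature) (S S' : structure sig) : Prop :=
  exists f : nat -> nat, bijective f /\
    forall (i : 'I_(size sig)) (t : (nth 0 sig i).-tuple nat),
      S i t = S' i (map_tuple f t).

Definition agree (sig : signature) (s : nat) (S S' : structure sig) : Prop :=
  forall (i : 'I_(size sig)) (t : (nth 0 sig i).-tuple nat),
    all (fun x => x <= s) t -> S i t = S' i t.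

Definition is_family (sig : signature) (I : countType) (K : I -> structure sig)
  : Prop := forall a b : I, iso (K a) (K b) -> a = b.

Definition finite_index (I : countType) : Prop :=
  exists s : seq I, forall a : I, a \in s.

Definition LD (sig : signature) (I : countType) (K : I -> structure sig)
  (S : structure sig) : Prop := exists a : I, iso S (K a).

(* A learner: M s S is its hypothesis on input S|_s ([None] is '?',
   [Some a] is the code of K a). It may only depend on S|_s. *)
Definition is_learner (sig : signature) (I : countType)
  (M : nat -> structure sig -> option I) : Prop :=
  forall s S S', agree s S S' -> M s S = M s S'.

Definition Ex_learns (sig : signature) (I : countType) (K : I -> structure sig)
  (M : nat -> structure sig -> option I) : Prop :=
  forall (a : I) (S : structure sig), iso S (K a) ->
    exists n0, forall n, n0 <= n -> M n S = Some a.

Definition nUs_learns (sig : signature) (I : countType) (K : I -> structure sig)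
  (M : nat -> structure sig -> option I) : Prop :=
  Ex_learns K M /\
  forall (a : I) (S : structure sig), iso S (K a) ->
    forall n m, n <= m -> M n S = Some a -> M m S = Some a.

Definition co_learns (sig : signature) (I : countType) (K : I -> structure sig)
  (M : nat -> structure sig -> option I) : Prop :=
  forall (a : I) (S : structure sig), iso S (K a) ->
    forall b : I, (exists s, M s S = Some b) <-> b <> a.

Definition E_range (p q : nat -> nat) : Prop :=
  forall x, (exists m, p m = x) <-> (exists m, q m = x).

(* Continuity of Gamma : LD(K) -> nat^nat (subspace topology of 2^nat on
   LD(K), product topology on nat^nat). The sets {S' | S'|_s = S|_s} form a
   neighbourhood basis of S in 2^nat (finite relational signature). *)
Definition continuous_on_LD (sig : signature) (I : countType)
  (K : I -> structure sig) (G : structure sig -> (nat -> nat)) : Prop :=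
  forall S, LD K S -> forall n, exists s, forall S', LD K S' -> agree s S S' ->
    forall m, m < n -> G S' m = G S m.

Definition Erange_learnable (sig : signature) (I : countType)
  (K : I -> structure sig) : Prop :=
  exists G : structure sig -> (nat -> nat), continuous_on_LD K G /\
    forall S S', LD K S -> LD K S' -> (iso S S' <-> E_range (G S) (G S')).

Inductive criterion := Ex | nUs | co | Erange.

Definition learnable (c : criterion) (sig : signature) (I : countType)
  (K : I -> structure sig) : Prop :=
  match c with
  | Ex => exists M, is_learner M /\ Ex_learns K M
  | nUs => exists M, is_learner M /\ nUs_learns K M
  | co => exists M, is_learner M /\ co_learns K M
  | Erange => Erange_learnable K
  end.

Definition learn_le (X Y : criterion) : Prop :=
  forall (sig : signature) (I : countType) (K : I -> structure sig),
    is_family K -> learnable X K -> learnable Y K.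

Definition learn_le_fin (X Y : criterion) : Prop :=
  forall (sig : signature) (I : countType) (K : I -> structure sig),
    finite_index I -> is_family K -> learnable X K -> learnable Y K.

Definition learn_lt X Y := learn_le X Y /\ ~ learn_le Y X.
Definition learn_lt_fin X Y := learn_le_fin X Y /\ ~ learn_le_fin Y X.
Definition learn_equiv_fin X Y := learn_le_fin X Y /\ learn_le_fin Y X.

(* Main.v *)
Require Import Defs.
From mathcomp Require Import all_boot.
From mathcomp Require Import zify.
From Stdlib Require Import ClassicalEpsilon Classical.
Set Implicit Arguments. Unset Strict Implicit. Unset Printing Implicit Defensive.

Definition pb (P : Prop) : bool := if excluded_middle_informative P then true else false.
Lemma pbP P : reflect P (pb P).
Proof. rewrite /pb; case: excluded_middle_informative => H; by constructor. Qed.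
Lemma pb_iff P Q : (P <-> Q) -> pb P = pb Q.
Proof. move=> H; apply/idP/idP => /pbP ?; apply/pbP; tauto. Qed.

Definition pull sig (S : structure sig) (g : nat -> nat) : structure sig :=
  fun i t => S i (map_tuple g t).

Lemma iso_pull sig (S : structure sig) g : bijective g -> iso (pull S g) S.
Proof. by move=> bg; exists g. Qed.

Lemma iso_refl sig (S : structure sig) : iso S S.
Proof.
exists id; split; first by exists id.
move=> i t; congr (S i _); apply: val_inj; by rewrite /= map_id.
Qed.

Lemma iso_sym sig (S T : structure sig) : iso S T -> iso T S.
Proof.
case=> f [[g fg gf] H]; exists g; split; first by exists f.
move=> i t; rewrite H; congr (T i _); apply: val_inj => /=.
by rewrite -map_comp (eq_map gf) map_id.
Qed.

Lemma iso_trans sig (S T U : structure sig) : iso S T -> iso T U -> iso S U.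
Proof.
case=> f [bf Hf] [h [bh Hh]]; exists (h \o f); split; first exact: bij_comp.
move=> i t; rewrite Hf Hh; congr (U i _); apply: val_inj => /=; by rewrite map_comp.
Qed.

Lemma agree_sym sig s (S T : structure sig) : agree s S T -> agree s T S.
Proof. move=> H i t Ht; by rewrite H. Qed.
Lemma agree_trans sig s (S T U : structure sig) : agree s S T -> agree s T U -> agree s S U.
Proof. move=> H1 H2 i t Ht; by rewrite H1 // H2. Qed.
Lemma agree_refl sig s (S : structure sig) : agree s S S.
Proof. by []. Qed.
Lemma agree_mono sig s s' (S T : structure sig) : s <= s' -> agree s' S T -> agree s S T.
Proof. move=> ss H i t Ht; apply: H; apply: sub_all Ht => x /= xs; exact: leq_trans xs ss. Qed.

Definition maxf (f : nat -> nat) s := \max_(x < s.+1) f x.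
Lemma maxfP f s x : x <= s -> f x <= maxf f s.
Proof. move=> xs; rewrite /maxf; exact: (@leq_bigmax _ (fun x : 'I_s.+1 => f x) (Ordinal (xs : x < s.+1))). Qed.

Lemma relabel sig (T S : structure sig) f :
  (forall i t, T i t = S i (map_tuple f t)) ->
  forall s S', agree (maxf f s) S S' -> agree s T (pull S' f).
Proof.
move=> H s S' HS i t Ht; rewrite H /pull; apply: HS.
rewrite /= all_map; apply: sub_all Ht => x /= xs; exact: maxfP.
Qed.

Definition compat sig (I : countType) (K : I -> structure sig) (S : structure sig) s b :=
  exists T, iso T (K b) /\ agree s S T.

Lemma compat_transfer sig (I : countType) (K : I -> structure sig) (T S : structure sig) b : iso T S ->
  (forall s, compat K S s b) -> forall s, compat K T s b.
Proof.
case=> f [bf H] HS s; case: (HS (maxf f s)) => X [iX aX].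
exists (pull X f); split; first exact: iso_trans (iso_pull X bf) iX.
exact: relabel H s X aX.
Qed.

Lemma compat_mono sig (I : countType) (K : I -> structure sig) S s s' b :
  s <= s' -> compat K S s' b -> compat K S s b.
Proof. move=> ss [T [iT aT]]; exists T; split=> //; exact: agree_mono ss aT. Qed.

Definition ageSep sig (I : countType) (K : I -> structure sig) := forall a b, a <> b ->
  ~ ((forall s, compat K (K a) s b) /\ (forall s, compat K (K b) s a)).

Lemma nUs_ageSep sig (I : countType) (K : I -> structure sig) M :
  is_learner M -> nUs_learns K M -> ageSep K.
Proof.
move=> LM [EM UM] a b ab [H1 H2].
case: (EM a (K a) (iso_refl _)) => s0 Hs0.
case: (H1 s0) => T [iT aT].
case: (EM b T iT) => n1 Hn1.
have MT1 : M (maxn s0 n1) T = Some b by apply: Hn1; exact: leq_maxr.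
case: (compat_transfer iT H2 (maxn s0 n1)) => X [iX aX].
have MX0 : M s0 X = Some a.
  rewrite -(LM _ _ _ (agree_mono (leq_maxl s0 n1) aX)) -(LM _ _ _ aT); exact: Hs0.
have := UM a X iX s0 (maxn s0 n1) (leq_maxl _ _) MX0.
rewrite -(LM _ _ _ aX) MT1 => -[] E; exact: ab (esym E).
Qed.

Lemma Erange_ageSep sig (I : countType) (K : I -> structure sig) :
  is_family K -> Erange_learnable K -> ageSep K.
Proof.
move=> fam [G [cG HG]].
have LDK c : LD K (K c) by exists c; exact: iso_refl.
have key : forall a b x m, G (K a) m = x -> ~ (exists m, G (K b) m = x) ->
    ~ (forall s, compat K (K a) s b).
  move=> a b x m Gm nx H.
  case: (cG (K a) (LDK a) m.+1) => s Hs.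
  case: (H s) => T [iT aT].
  have LT : LD K T by exists b.
  have GT := Hs T LT aT m (ltnSn m).
  apply: nx; have [h _] := (HG T (K b) LT (LDK b)).1 iT x; apply: h; exists m; by rewrite GT.
move=> a b ab [H1 H2].
have niso : ~ E_range (G (K a)) (G (K b)).
  move=> E; apply: ab; apply: fam; exact: (HG _ _ (LDK a) (LDK b)).2 E.
apply: niso => x; split.
- case=> m Gm; apply: NNPP => nx; exact: key a b x m Gm nx H1.
- case=> m Gm; apply: NNPP => nx; exact: key b a x m Gm nx H2.
Qed.

(* co => nUs *)
Definition outby sig (I : countType) (M : nat -> structure sig -> option I) s S (b : I) :=
  exists t, t <= s /\ M t S = Some b.
Definition cpred sig (I : countType) (M : nat -> structure sig -> option I) s S n :=
  pb (exists b : I, pickle b = n /\ ~ outby M s S b).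
Definition coM sig (I : countType) (M : nat -> structure sig -> option I) s S : option I :=
  match excluded_middle_informative (exists n, cpred M s S n) with
  | left H => pickle_inv (ex_minn H)
  | right _ => None end.

Lemma coM_learner sig (I : countType) (M : nat -> structure sig -> option I) :
  is_learner M -> is_learner (coM M).
Proof.
move=> LM s S S' aS.
have E : cpred M s S =1 cpred M s S'.
  move=> n; apply: pb_iff; split; case=> b [pb' nout]; exists b; split=> //;
    move=> [t [ts Mt]]; apply: nout; exists t; split=> //.
  - by rewrite (LM _ _ _ (agree_mono ts aS)).
  - by rewrite -(LM _ _ _ (agree_mono ts aS)).
rewrite /coM; case: excluded_middle_informative => H1; case: excluded_middle_informative => H2 //.
- by rewrite (eq_ex_minn H1 H2 E).
- exfalso; apply: H2; case: H1 => n Hn; exists n; by rewrite -E.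
- exfalso; apply: H1; case: H2 => n Hn; exists n; by rewrite E.
Qed.

Lemma coM_eq sig (I : countType) (M : nat -> structure sig -> option I) s S a :
  (forall k, k < pickle a -> ~~ cpred M s S k) -> cpred M s S (pickle a) -> coM M s S = Some a.
Proof.
move=> Hlt Ha; rewrite /coM; case: excluded_middle_informative => [H|H];
  last by exfalso; apply: H; exists (pickle a).
case: ex_minnP => m Pm Hm.
have -> : m = pickle a.
  apply/eqP; rewrite eqn_leq Hm //= leqNgt; apply/negP => /Hlt; by rewrite Pm.
exact: pickleK_inv.
Qed.

Lemma coM_some sig (I : countType) (M : nat -> structure sig -> option I) s S a :
  coM M s S = Some a -> forall k, k < pickle a -> ~~ cpred M s S k.
Proof.
rewrite /coM; case: excluded_middle_informative => [H|//].
case: ex_minnP => m Pm Hm Hinv.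
have pm : pickle a = m by have := @pickle_invK I m; rewrite Hinv.
move=> k klt; apply/negP => Pk; have := Hm k Pk; by rewrite -pm leqNgt klt.
Qed.

Lemma cpred_mono sig (I : countType) (M : nat -> structure sig -> option I) n m S k :
  n <= m -> cpred M m S k -> cpred M n S k.
Proof.
move=> nm /pbP [b [pb' nout]]; apply/pbP; exists b; split=> //.
move=> [t [tn Mt]]; apply: nout; exists t; split=> //; exact: leq_trans tn nm.
Qed.

Lemma bound_nat (P : nat -> nat -> Prop) k :
  (forall n, n < k -> exists s, forall s', s <= s' -> P n s') ->
  exists s, forall s', s <= s' -> forall n, n < k -> P n s'.
Proof.
elim: k => [|k IH] H; first by exists 0.
case: IH => [n nk|s Hs]; first by apply: H; exact: ltnW.
case: (H k (ltnSn k)) => t Ht; exists (maxn s t) => s' hs' n; rewrite ltnS leq_eqVlt => /orP [/eqP ->|nk].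
- apply: Ht; exact: leq_trans (leq_maxr _ _) hs'.
- apply: Hs => //; exact: leq_trans (leq_maxl _ _) hs'.
Qed.

Lemma bound_seq (T : eqType) (l : seq T) (P : T -> nat -> Prop) :
  (forall x, x \in l -> exists s, forall s', s <= s' -> P x s') ->
  exists s, forall s', s <= s' -> forall x, x \in l -> P x s'.
Proof.
elim: l => [|y l IH] H; first by exists 0.
case: IH => [x xl|s Hs]; first by apply: H; rewrite inE xl orbT.
case: (H y (mem_head _ _)) => t Ht; exists (maxn s t) => s' hs' x; rewrite inE => /orP [/eqP ->|xl].
- apply: Ht; exact: leq_trans (leq_maxr _ _) hs'.
- apply: Hs => //; exact: leq_trans (leq_maxl _ _) hs'.
Qed.

Lemma co_nUs sig (I : countType) (K : I -> structure sig) M :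
  co_learns K M -> nUs_learns K (coM M).
Proof.
move=> co.
have Ha : forall a S, iso S (K a) -> forall s, cpred M s S (pickle a).
  move=> a S iS s; apply/pbP; exists a; split=> // -[t [_ Mt]].
  by apply: ((co a S iS a).1 (ex_intro _ t Mt)).
split.
- move=> a S iS.
  have [s0 Hs0] : exists s, forall s', s <= s' -> forall n, n < pickle a -> ~~ cpred M s' S n.
    apply: bound_nat => n na.
    case: (classic (exists b : I, pickle b = n)) => [[b pbn]|nb].
    + have ba : b <> a by move=> E; move: na; rewrite -pbn E ltnn.
      case: ((co a S iS b).2 ba) => t Mt; exists t => s' ts'.
      apply/negP => /pbP [b' [pb' nout]]; apply: nout.
      have -> : b' = b by apply: (pcan_inj (@pickleK_inv I)); rewrite pb' pbn.
      by exists t.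
    + exists 0 => s' _; apply/negP => /pbP [b' [pb' _]]; apply: nb; by exists b'.
  exists s0 => n ns0; apply: coM_eq; [exact: Hs0 | exact: Ha].
- move=> a S iS n m nm Hn; apply: coM_eq; last exact: Ha.
  move=> k ka; apply/negP => /(cpred_mono nm) Pk.
  by move: (coM_some Hn ka); rewrite Pk.
Qed.

(* ageSep => Erange *)
Definition inU sig (I : countType) (K : I -> structure sig) c s (S : structure sig) :=
  exists T, iso T S /\ agree s (K c) T.

Definition tokG sig (I : countType) (K : I -> structure sig) (S : structure sig) (m : nat) : nat :=
  match CodeSeq.decode m with
  | [:: k; s; n] => match @pickle_inv I k with
                    | Some c => if pb (forall S', agree n S S' -> inU K c s S')
                                then (CodeSeq.code [:: k; s]).+1 else 0
                    | None => 0 end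
  | _ => 0 end.

Lemma inU_open sig (I : countType) (K : I -> structure sig) c s S :
  inU K c s S -> exists n, forall S', agree n S S' -> inU K c s S'.
Proof.
case=> T [[f [bf H]] aT]; exists (maxf f s) => S' aS.
exists (pull S' f); split; first exact: iso_pull.
exact: agree_trans aT (relabel H aS).
Qed.

Lemma inU_iso sig (I : countType) (K : I -> structure sig) c s S S2 :
  iso S S2 -> inU K c s S -> inU K c s S2.
Proof. move=> i [T [iT aT]]; exists T; split=> //; exact: iso_trans iT i. Qed.

Lemma tokG_loc sig (I : countType) (K : I -> structure sig) S S' m :
  agree (nth 0 (CodeSeq.decode m) 2) S S' -> tokG K S' m = tokG K S m.
Proof.
rewrite /tokG; case: (CodeSeq.decode m) => [|k [|s [|n [|? ?]]]] //= aS.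
case: (pickle_inv k) => [c|] //.
rewrite (@pb_iff (forall S'', agree n S' S'' -> inU K c s S'')
                 (forall S'', agree n S S'' -> inU K c s S'')) //.
split=> H S'' a2; apply: H; [exact: agree_trans (agree_sym aS) a2 | exact: agree_trans aS a2].
Qed.

Lemma tokG_range sig (I : countType) (K : I -> structure sig) S x :
  (exists m, tokG K S m = x) <->
  (x = 0 \/ exists c s, x = (CodeSeq.code [:: pickle c; s]).+1 /\ inU K c s S).
Proof.
split.
- case=> m; rewrite /tokG; case: (CodeSeq.decode m) => [|k [|s [|n [|? ?]]]]; try by left.
  case E: (pickle_inv k) => [c|]; last by left.
  case: pbP => [H|_]; last by left.
  move=> <-; right; exists c, s; split.
  + by have := @pickle_invK I k; rewrite E /= => ->.
  + apply: H; exact: agree_refl.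
- case=> [->|[c [s [-> HU]]]].
  + exists (CodeSeq.code [::]); by rewrite /tokG CodeSeq.codeK.
  + case: (inU_open HU) => n Hn; exists (CodeSeq.code [:: pickle c; s; n]).
    rewrite /tokG CodeSeq.codeK pickleK_inv; case: pbP => // [[]]; exact: Hn.
Qed.

Lemma tok_compat sig (I : countType) (K : I -> structure sig) S S' a b :
  iso S (K a) -> iso S' (K b) -> E_range (tokG K S) (tokG K S') ->
  forall s, compat K (K a) s b.
Proof.
move=> iSa iSb E s.
have : exists m, tokG K S m = (CodeSeq.code [:: pickle a; s]).+1.
  apply/tokG_range; right; exists a, s; split=> //; exists (K a); split;
    [exact: iso_sym | exact: agree_refl].
move/E/tokG_range => [//|[c [s2 [Hx HU]]]].
move: Hx => /succn_inj /(can_inj CodeSeq.codeK) [/(pcan_inj (@pickleK_inv I)) ac ss2]; subst c s2.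
case: HU => T [iT aT]; exists T; split => //; exact: iso_trans iT iSb.
Qed.

Lemma ageSep_Erange sig (I : countType) (K : I -> structure sig) :
  ageSep K -> Erange_learnable K.
Proof.
move=> sep; exists (tokG K); split.
- move=> S _ n; exists (maxf (fun m => nth 0 (CodeSeq.decode m) 2) n) => S' _ aS m mn.
  apply: tokG_loc; apply: agree_mono aS; apply: maxfP; exact: ltnW.
- move=> S S' [a iSa] [b iSb]; split.
  + move=> iSS' x; rewrite !tokG_range; split; case=> [->|[c [s [-> HU]]]]; try by left.
    * right; exists c, s; split=> //; exact: inU_iso iSS' HU.
    * right; exists c, s; split=> //; exact: inU_iso (iso_sym iSS') HU.
  + move=> E; case: (classic (a = b)) => [ab|nab].
    * subst b; exact: iso_trans iSa (iso_sym iSb).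
    * exfalso; apply: (sep a b nab); split.
      -- exact: tok_compat iSa iSb E.
      -- apply: tok_compat iSb iSa _ => x; exact: iff_sym (E x).
Qed.

(* finite + ageSep => nUs *)
Fixpoint amin (T : Type) (key : T -> nat) (l : seq T) : option T :=
  match l with
  | [::] => None
  | b :: l' => match amin key l' with
               | None => Some b
               | Some c => if key b <= key c then Some b else Some c end end.

Lemma amin_none (T : Type) (key : T -> nat) l : amin key l = None -> l = [::].
Proof. case: l => [//|x l] /=; case: (amin key l) => [c|] //; by case: ifP. Qed.

Lemma amin_some (T : eqType) (key : T -> nat) l b :
  amin key l = Some b -> b \in l /\ forall c, c \in l -> key b <= key c.
Proof.
elim: l b => [//|x l IH] b /=.
case E: (amin key l) => [c|].
- case: (IH c E) => cl Hc.
  case: ifP => hx [<-].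
  + split; first exact: mem_head.
    move=> d; rewrite inE => /orP [/eqP ->//|dl]; exact: leq_trans hx (Hc d dl).
  + split; first by rewrite inE cl orbT.
    move=> d; rewrite inE => /orP [/eqP ->|dl]; last exact: Hc.
    move: hx; lia.
- move=> [<-]; split; first exact: mem_head.
  move=> d; rewrite inE => /orP [/eqP ->//|dl].
  by move: dl; rewrite (amin_none E).
Qed.


Lemma amin_spec (T : eqType) (key : T -> nat) l b :
  b \in l -> (forall c, c \in l -> c != b -> key b < key c) -> amin key l = Some b.
Proof.
move=> bl H; case E: (amin key l) => [c|]; last by move: (amin_none E) bl => ->.
case: (amin_some E) => cl Hc; case: (eqVneq c b) => [->//|cb].
have := H c cl cb; have := Hc b bl; lia.
Qed.

Lemma count_strict (T : eqType) (p q : pred T) (l : seq T) y :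
  (forall x, x \in l -> p x -> q x) -> y \in l -> q y -> ~~ p y -> count p l < count q l.
Proof.
elim: l => [//|x l IH] H yl qy py /=.
have Hl : forall z, z \in l -> p z -> q z by move=> z zl; apply: H; rewrite inE zl orbT.
have pq : p x <= q x by case E: (p x) => //=; rewrite (H x (mem_head _ _) E).
have sub : count p l <= count q l.
  elim: l Hl {IH H yl} => [//|z l IHl] Hl /=.
  have : p z <= q z by case E: (p z) => //=; rewrite (Hl z (mem_head _ _) E).
  have Hl' : forall w, w \in l -> p w -> q w by move=> w wl; apply: Hl; rewrite inE wl orbT.
  have := IHl Hl'; lia.
move: yl; rewrite inE => /orP [/eqP Ey|yl].
- subst y; move: qy py; case: (p x); case: (q x) => //= _ _; lia.
- have := IH Hl yl qy py; lia.
Qed.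

Definition le_age sig (I : countType) (K : I -> structure sig) a b := forall s, compat K (K a) s b.

Lemma le_age_refl sig (I : countType) (K : I -> structure sig) a : le_age K a a.
Proof. move=> s; exists (K a); split; [exact: iso_refl | exact: agree_refl]. Qed.

Lemma le_age_trans sig (I : countType) (K : I -> structure sig) a b c :
  le_age K c a -> le_age K a b -> le_age K c b.
Proof.
move=> H1 H2 s; case: (H1 s) => T [iT aT].
case: (compat_transfer iT H2 s) => X [iX aX]; exists X; split=> //; exact: agree_trans aT aX.
Qed.

Definition fkey sig (I : countType) (K : I -> structure sig) (e : seq I) b :=
  count (fun c => pb (le_age K c b)) e * (size e) + index b e.

Definition finM sig (I : countType) (K : I -> structure sig) (e : seq I) s S :=
  amin (fkey K e) [seq b <- e | pb (compat K S s b)].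

Lemma fkey_lt sig (I : countType) (K : I -> structure sig) e a b :
  ageSep K -> b \in e -> a \in e -> a != b -> le_age K a b -> fkey K e a < fkey K e b.
Proof.
move=> sep be ae ab lab.
have cl : count (fun c => pb (le_age K c a)) e < count (fun c => pb (le_age K c b)) e.
  apply: (count_strict (y := b)) => //.
  - move=> x _ /pbP H; apply/pbP; exact: le_age_trans H lab.
  - apply/pbP; exact: le_age_refl.
  - apply/negP => /pbP lba; apply: (sep a b (elimN eqP ab)); split=> //.
have ia : index a e < size e by rewrite index_mem.
rewrite /fkey; set ca := count _ e in cl *; set cb := count _ e in cl *.
have : ca.+1 * size e <= cb * size e by rewrite leq_mul2r cl orbT.
rewrite mulSn => H; clearbody ca cb; move: H ia; move: (index a e) (index b e) (size e) => x y z; nia.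
Qed.

Lemma fkey_inj sig (I : countType) (K : I -> structure sig) e a b :
  a \in e -> b \in e -> fkey K e a = fkey K e b -> a = b.
Proof.
move=> ae be E.
have : index a e = index b e.
  have := congr1 (fun x => x %% size e) E; rewrite /fkey /= !modnMDl !modn_small //; by rewrite index_mem.
move=> Ei; by rewrite -(nth_index a ae) Ei (nth_index a be).
Qed.

Lemma fin_nUs sig (I : countType) (K : I -> structure sig) :
  finite_index I -> ageSep K -> exists M, is_learner M /\ nUs_learns K M.
Proof.
move=> [e0 He0] sep; set e := undup e0.
have He : forall x, x \in e by move=> x; rewrite mem_undup.
exists (finM K e); split.
- move=> s S S' aS; rewrite /finM; congr amin; apply: eq_filter => b; apply: pb_iff.
  split=> -[T [iT aT]]; exists T; split=> //;
    [exact: agree_trans (agree_sym aS) aT | exact: agree_trans aS aT].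
have cS : forall a S s, iso S (K a) -> compat K S s a.
  move=> a S s iS; exists S; split=> //; exact: agree_refl.
split.
- move=> a S iS.
  have [s0 Hs0] : exists s0, forall s', s0 <= s' -> forall b, b \in e ->
      le_age K a b \/ ~ compat K S s' b.
    apply: bound_seq => b _.
    case: (classic (le_age K a b)) => [H|H]; first by exists 0 => s' _; left.
    have : ~ (forall s, compat K S s b).
      move=> H2; apply: H; exact: compat_transfer (iso_sym iS) H2.
    move=> /not_all_ex_not [s Hs]; exists s => s' ss'; right => C; apply: Hs.
    exact: compat_mono ss' C.
  exists s0 => n ns0; apply: amin_spec.
  + rewrite mem_filter He andbT; apply/pbP; exact: cS.
  + move=> c; rewrite mem_filter => /andP [/pbP Cc ce] ca.
    apply: fkey_lt => //; first by rewrite eq_sym.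
    by case: (Hs0 n ns0 c ce).
- move=> a S iS n m nm Hn; apply: amin_spec.
  + rewrite mem_filter He andbT; apply/pbP; exact: cS.
  + move=> c; rewrite mem_filter => /andP [/pbP Cc ce] ca.
    case: (amin_some Hn) => _ Hmin.
    have cn : c \in [seq b <- e | pb (compat K S n b)].
      rewrite mem_filter ce andbT; apply/pbP; exact: compat_mono nm Cc.
    have := Hmin c cn; rewrite leq_eqVlt => /orP [/eqP E|//].
    by move: ca; rewrite (fkey_inj (He a) (He c) E) eqxx.
Qed.

Definition mk1 (p : nat -> bool) : structure [:: 1] := fun i t => p (nth 0 t 0).
Definition mk2 (r : nat -> nat -> bool) : structure [:: 2] := fun i t => r (nth 0 t 0) (nth 0 t 1).
Definition at1 (S : structure [:: 1]) x := S ord0 [tuple x].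
Definition at2 (S : structure [:: 2]) x y := S ord0 [tuple x; y].

Lemma at1_mk1 p x : at1 (mk1 p) x = p x. Proof. by []. Qed.
Lemma at2_mk2 r x y : at2 (mk2 r) x y = r x y. Proof. by []. Qed.

Lemma struct1E (S : structure [:: 1]) i t : S i t = at1 S (nth 0 t 0).
Proof.
move: t; have -> : i = ord0 := ord1 i.
case=> [[|x [|y s]] //= Ht]; rewrite /at1; congr (S _ _); exact: val_inj.
Qed.

Lemma struct2E (S : structure [:: 2]) i t : S i t = at2 S (nth 0 t 0) (nth 0 t 1).
Proof.
move: t; have -> : i = ord0 := ord1 i.
case=> [[|x [|y [|z s]]] //= Ht]; rewrite /at2; congr (S _ _); exact: val_inj.
Qed.

Lemma nth_le s (t : seq nat) k : all (fun x => x <= s) t -> nth 0 t k <= s.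
Proof.
move=> /allP H; case: (ltnP k (size t)) => hk; [apply: H; exact: mem_nth | by rewrite nth_default].
Qed.

Lemma agree1 s (S T : structure [:: 1]) : (forall x, x <= s -> at1 S x = at1 T x) -> agree s S T.
Proof. move=> H i t Ht; rewrite !struct1E; apply: H; exact: nth_le. Qed.

Lemma agree2 s (S T : structure [:: 2]) :
  (forall x y, x <= s -> y <= s -> at2 S x y = at2 T x y) -> agree s S T.
Proof. move=> H i t Ht; rewrite !struct2E; apply: H; exact: nth_le. Qed.

Lemma iso_at1 (T S : structure [:: 1]) f : (forall i t, T i t = S i (map_tuple f t)) ->
  forall x, at1 T x = at1 S (f x).
Proof. move=> H x; rewrite /at1 H; congr (S _ _); exact: val_inj. Qed.

Lemma iso_at2 (T S : structure [:: 2]) f : (forall i t, T i t = S i (map_tuple f t)) ->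
  forall x y, at2 T x y = at2 S (f x) (f y).
Proof. move=> H x y; rewrite /at2 H; congr (S _ _); exact: val_inj. Qed.

Lemma pull_at1 (S : structure [:: 1]) g x : at1 (pull S g) x = at1 S (g x).
Proof. exact: (@iso_at1 (pull S g) S g (fun _ _ => erefl)). Qed.
Lemma pull_at2 (S : structure [:: 2]) g x y : at2 (pull S g) x y = at2 S (g x) (g y).
Proof. exact: (@iso_at2 (pull S g) S g (fun _ _ => erefl)). Qed.

Definition K1 (b : bool) : structure [:: 1] :=
  if b then mk1 (fun x => x != 0) else mk1 (fun _ => true).

Lemma K1_fam : is_family K1.
Proof.
case; case=> // -[f [[g fg gf] H]].
- by have := iso_at1 H 0.
- have := iso_at1 H (g 0); by rewrite /= gf.
Qed.

Lemma K1_sep : ageSep K1.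
Proof.
have no : ~ compat K1 (K1 true) 0 false.
  case=> T [[f [_ H]] aT].
  have := aT ord0 [tuple 0] isT; rewrite -/(at1 _ 0) -/(at1 T 0) (iso_at1 H 0) //.
case; case=> // _ [H1 H2]; [exact: no (H1 0) | exact: no (H2 0)].
Qed.

Lemma K1_notco M : is_learner M -> ~ co_learns K1 M.
Proof.
move=> LM co.
have [s Hs] : exists s, M s (K1 false) = Some true by apply/(co false (K1 false) (iso_refl _) true).
pose sw x := if x == 0 then s.+1 else if x == s.+1 then 0 else x.
have bsw : bijective sw by exists sw => x; rewrite /sw; repeat case: ifP; lia.
have ag : agree s (K1 false) (pull (K1 true) sw).
  apply: agree1 => x xs; rewrite pull_at1 /at1 /= /mk1 /= /sw.
  case: ifP => [_|/eqP x0] //; case: ifP => [/eqP|_]; [lia | by case: (x) x0].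
have H := (co true (pull (K1 true) sw) (iso_pull _ bsw) true).1.
apply: H => //; exists s; by rewrite -(LM _ _ _ ag).
Qed.

(* K2 : omega vs omega* *)
Definition om := mk2 (fun x y => y == x.+1).
Definition oms := mk2 (fun x y => x == y.+1).
Definition K2 (b : bool) := if b then om else oms.

Lemma K2_fam : is_family K2.
Proof.
case; case=> // -[f [[g fg gf] H]].
- have := iso_at2 H (g (f 0).+1) 0; by rewrite /= /om /oms !at2_mk2 gf eqxx.
- have := iso_at2 H (g 0).+1 (g 0); rewrite /= /om /oms !at2_mk2 gf eqxx /=; lia.
Qed.

Definition rv s x := if x <= s then s - x else x.
Lemma rv_bij s : bijective (rv s).
Proof. exists (rv s) => x; rewrite /rv; repeat case: ifP; lia. Qed.

Lemma K2_notsep : ~ ageSep K2.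
Proof.
move=> sep; apply: (sep true false) => //; split=> s.
- exists (pull oms (rv s)); split; first exact: iso_pull (rv_bij s).
  apply: agree2 => x y xs ys; rewrite pull_at2 /om /oms !at2_mk2 /rv xs ys.
  apply/eqP/eqP; lia.
- exists (pull om (rv s)); split; first exact: iso_pull (rv_bij s).
  apply: agree2 => x y xs ys; rewrite pull_at2 /om /oms !at2_mk2 /rv xs ys.
  apply/eqP/eqP; lia.
Qed.

Definition lnf (R : nat -> nat -> bool) s :=
  find (fun x => ~~ has (fun y => R y x) (iota 0 s.+1)) (iota 0 s.+1).

Lemma find_iota_eq (p : pred nat) s r :
  p r -> r <= s -> (forall x, x < r -> ~~ p x) -> find p (iota 0 s.+1) = r.
Proof.
move=> pr rs H.
have hs : has p (iota 0 s.+1) by apply/hasP; exists r => //; rewrite mem_iota.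
have fl : find p (iota 0 s.+1) < size (iota 0 s.+1) by rewrite -has_find.
rewrite size_iota in fl.
have := nth_find 0 hs; rewrite nth_iota // add0n => pf.
case: (ltngtP (find p (iota 0 s.+1)) r) => // [lt|gt].
- by move: (H _ lt); rewrite pf.
- by have := before_find 0 gt; rewrite nth_iota ?add0n ?pr //; lia.
Qed.

Lemma find_iota_gt (p : pred nat) s r :
  r <= s -> (forall x, x <= r -> ~~ p x) -> r < find p (iota 0 s.+1).
Proof.
move=> rs H; rewrite ltnNge; apply/negP => fr.
have fl : find p (iota 0 s.+1) < size (iota 0 s.+1) by rewrite size_iota; lia.
rewrite -has_find in fl.
have := nth_find 0 fl; rewrite nth_iota ?add0n; last by lia.
by rewrite (negbTE (H _ fr)).
Qed.

Lemma eq_in_find' (p q : pred nat) (l : seq nat) : {in l, p =1 q} -> find p l = find q l.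
Proof.
elim: l => [//|z l IH] E /=.
rewrite E ?mem_head // IH // => w wl; apply: E; by rewrite inE wl orbT.
Qed.

Lemma lnf_loc (R R' : nat -> nat -> bool) s :
  (forall x y, x <= s -> y <= s -> R x y = R' x y) -> lnf R s = lnf R' s.
Proof.
move=> H; rewrite /lnf.
have E : {in iota 0 s.+1, (fun x => ~~ has (fun y => R y x) (iota 0 s.+1)) =1
                          (fun x => ~~ has (fun y => R' y x) (iota 0 s.+1))}.
  move=> x; rewrite mem_iota => xs; congr negb; apply: eq_in_has => y.
  rewrite mem_iota => ys; apply: H; lia.
exact: eq_in_find' E.
Qed.

Lemma lnf_conv (R : nat -> nat -> bool) f : bijective f ->
  (forall x y, R x y = (f y == (f x).+1)) ->
  exists s0, forall s, s0 <= s -> lnf R s < lnf (fun y x => R x y) s.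
Proof.
move=> [g fg gf] HR; set r := g 0.
exists (r + maxf (fun x => g (f x).-1 + g (f x).+1) r) => s hs.
have rs : r <= s by lia.
have bnd : forall x, x <= r -> g (f x).-1 <= s /\ g (f x).+1 <= s.
  move=> x xr; have := maxfP (fun x => g (f x).-1 + g (f x).+1) xr; lia.
have -> : lnf R s = r.
  apply: find_iota_eq => //.
  - apply/hasP => -[y _]; by rewrite HR /r gf.
  - move=> x xr; rewrite negbK; apply/hasP; exists (g (f x).-1).
    + rewrite mem_iota; have := bnd x (ltnW xr); lia.
    + rewrite HR gf; have : f x != 0.
        apply/eqP => fx0; have : x = r by rewrite /r -fx0 fg.
        lia.
      by case: (f x).
apply: find_iota_gt => // x xr; rewrite negbK; apply/hasP; exists (g (f x).+1).
- rewrite mem_iota; have := bnd x xr; lia.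
- by rewrite HR gf.
Qed.

Definition M2 (s : nat) (S : structure [:: 2]) : option bool :=
  if lnf (at2 S) s <= lnf (fun y x => at2 S x y) s then Some true else Some false.

Lemma M2_learner : is_learner M2.
Proof.
move=> s S S' aS.
have E : forall x y, x <= s -> y <= s -> at2 S x y = at2 S' x y.
  move=> x y xs ys; apply: aS => /=; by rewrite xs ys.
rewrite /M2 (lnf_loc (R' := at2 S')) // (lnf_loc (R := fun y x => at2 S x y) (R' := fun y x => at2 S' x y)) //.
move=> x y xs ys; exact: E.
Qed.

Lemma M2_Ex : Ex_learns K2 M2.
Proof.
case=> S [f [bf H]].
- have [s0 Hs0] := @lnf_conv (at2 S) f bf (fun x y => iso_at2 H x y).
  exists s0 => n hn; rewrite /M2 ltnW //; exact: Hs0.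
- have [s0 Hs0] := @lnf_conv (fun y x => at2 S x y) f bf (fun x y => iso_at2 H y x).
  exists s0 => n hn; rewrite /M2 leqNgt Hs0 //.
Qed.

Definition A3 := mk1 (fun x => x %% 2 == 1).
Definition B3 n := mk1 (fun x => (x %% 2 == 1) || (2 * n < x)).
Definition K3 (n : nat) : structure [:: 1] := if n is m.+1 then B3 m else A3.

Definition ev k := [seq 2 * i | i <- iota 0 k].
Lemma ev_uniq k : uniq (ev k).
Proof. rewrite map_inj_uniq ?iota_uniq // => x y; lia. Qed.
Lemma ev_size k : size (ev k) = k.
Proof. by rewrite size_map size_iota. Qed.

Lemma pig (T : structure [:: 1]) m l : iso T (B3 m) -> uniq l ->
  (forall x, x \in l -> at1 T x = false) -> size l <= m.+1.
Proof.
move=> [f [[g fg gf] H]] ul Hl.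
rewrite -(size_map f) -(ev_size m.+1); apply: uniq_leq_size.
- by rewrite map_inj_uniq //; exact: can_inj fg.
- move=> y /mapP [x xl ->]; have := Hl x xl; rewrite (iso_at1 H) at1_mk1 => E.
  apply/mapP; exists (f x %/ 2); [rewrite mem_iota; lia | lia].
Qed.

Lemma at1_agree s (S T : structure [:: 1]) x : agree s S T -> x <= s -> at1 S x = at1 T x.
Proof. move=> aT xs; apply: aT => /=; by rewrite xs. Qed.

Lemma K3_fam : is_family K3.
Proof.
have AB : forall m, ~ iso A3 (B3 m).
  move=> m iA; have := pig iA (ev_uniq m.+2); rewrite ev_size ltnn => H; suff : false by []; apply: H.
  move=> x /mapP [i _ ->]; rewrite at1_mk1; lia.
have BB : forall n m, iso (B3 n) (B3 m) -> n <= m.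
  move=> n m iB; have := pig iB (ev_uniq n.+1); rewrite ev_size ltnS; apply.
  move=> x /mapP [i]; rewrite mem_iota => ? ->; rewrite at1_mk1; lia.
case=> [|n] [|m] //= i.
- by case: (AB m i).
- by case: (AB n (iso_sym i)).
- by have := BB _ _ i; have := BB _ _ (iso_sym i) => ??; congr S; lia.
Qed.

Lemma K3_sep : ageSep K3.
Proof.
have nA : forall n, ~ compat K3 A3 (2 * n + 2) n.+1.
  move=> n [T [iT aT]]; have := pig iT (ev_uniq n.+2); rewrite ev_size ltnn => H; suff : false by []; apply: H.
  move=> x /mapP [i]; rewrite mem_iota => ? ->; rewrite -(at1_agree aT); last lia.
  rewrite at1_mk1; lia.
have nB : forall n m, m < n -> ~ compat K3 (B3 n) (2 * n) m.+1.
  move=> n m mn [T [iT aT]]; have := pig iT (ev_uniq n.+1); rewrite ev_size ltnS => H.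
  suff : n <= m by lia.
  apply: H => x /mapP [i]; rewrite mem_iota => ? ->; rewrite -(at1_agree aT); last lia.
  rewrite at1_mk1; lia.
case=> [|n] [|m] // nm [H1 H2].
- exact: nA m (H1 _).
- exact: nA n (H2 _).
- case: (ltngtP m n) => [mn|nm'|e]; last by apply: nm; rewrite e.
  + exact: nB n m mn (H1 _).
  + exact: nB m n nm' (H2 _).
Qed.

Lemma K3_notnUs M : is_learner M -> ~ nUs_learns K3 M.
Proof.
move=> LM [EM UM].
case: (EM 0 A3 (iso_refl _)) => s0 Hs0.
have aAB : agree s0 A3 (B3 s0).
  apply: agree1 => x xs; rewrite !at1_mk1; have -> : (2 * s0 < x) = false by lia.
  by rewrite orbF.
have MB0 : M s0 (B3 s0) = Some 0 by rewrite -(LM _ _ _ aAB); exact: Hs0.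
case: (EM s0.+1 (B3 s0) (iso_refl _)) => n1 Hn1.
set s1 := maxn s0 n1.
have MB1 : M s1 (B3 s0) = Some s0.+1 by apply: Hn1; exact: leq_maxr.
pose K := 2 * s1 + 1.
pose h x := if [&& 2 * s0 < x, x <= s1 & x %% 2 == 0] then x + K
            else if [&& 2 * s0 + K < x, x <= s1 + K & x %% 2 == 1] then x - K else x.
have bh : bijective h by exists h => x; rewrite /h /K; repeat case: ifP; lia.
have aBX : agree s1 (B3 s0) (pull A3 h).
  apply: agree1 => x xs; rewrite pull_at1 !at1_mk1 /h /K.
  repeat case: ifP; move=> *; apply/idP/idP; lia.
have MX0 : M s0 (pull A3 h) = Some 0.
  by rewrite -(LM _ _ _ (agree_mono (leq_maxl s0 n1) aBX)).
have := UM 0 (pull A3 h) (iso_pull _ bh) s0 s1 (leq_maxl _ _) MX0.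
by rewrite -(LM _ _ _ aBX) MB1.
Qed.

Lemma bool_fin : finite_index bool.
Proof. by exists [:: true; false] => -[]. Qed.

Theorem mainTheorem12 :
  (learn_lt co nUs /\ learn_lt_fin co nUs) /\
  (learn_lt nUs Erange /\ learn_equiv_fin nUs Erange) /\
  (learn_lt_fin nUs Ex /\ learn_lt nUs Ex).
Proof.
have coN : learn_le co nUs.
  move=> sig I K _ [M [LM cM]]; exists (coM M); split; [exact: coM_learner | exact: co_nUs].
have nE : learn_le nUs Erange.
  move=> sig I K _ [M [LM nM]]; apply: ageSep_Erange; exact: nUs_ageSep LM nM.
have nEx : learn_le nUs Ex.
  by move=> sig I K _ [M [LM [eM _]]]; exists M.
have K1n : learnable nUs K1 by apply: fin_nUs; [exact: bool_fin | exact: K1_sep].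
have K1c : ~ learnable co K1 by case=> M [LM cM]; exact: K1_notco LM cM.
have K2e : learnable Ex K2 by exists M2; split; [exact: M2_learner | exact: M2_Ex].
have K2n : ~ learnable nUs K2 by case=> M [LM nM]; apply: K2_notsep; exact: nUs_ageSep LM nM.
have K3e : learnable Erange K3 by apply: ageSep_Erange; exact: K3_sep.
have K3n : ~ learnable nUs K3 by case=> M [LM nM]; exact: K3_notnUs LM nM.
repeat split.
- exact: coN.
- move=> H; exact: K1c (H _ _ K1 K1_fam K1n).
- move=> sig I K _; exact: coN.
- move=> H; exact: K1c (H _ _ K1 bool_fin K1_fam K1n).
- exact: nE.
- move=> H; exact: K3n (H _ _ K3 K3_fam K3e).
- move=> sig I K _; exact: nE.
- move=> sig I K fin fam /(Erange_ageSep fam) sep; exact: fin_nUs fin sep.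
- move=> sig I K _; exact: nEx.
- move=> H; exact: K2n (H _ _ K2 bool_fin K2_fam K2e).
- exact: nEx.
- move=> H; exact: K2n (H _ _ K2 K2_fam K2e).
Qed.
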